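(* Let $k\ge 0$ and let $H$ be a digraph that has a complete set of obstructions consisting of oriented trees of algebraic height at most $k$. Then the arc graph $\delta H$ has a complete set of obstructions consisting of oriented trees of algebraic height at most $k+1$.
   Context: Digraphs are finite; homomorphisms are arc-preserving vertex maps. A set $\mathcal F$ of digraphs is a complete set of obstructions for $H$ if for every digraph $G$: $G\to H$ iff no $F\in\mathcal F$ admits a homomorphism to $G$. An oriented tree is a digraph whose underlying undirected graph is a tree. The algebraic height of an oriented tree $T$ is the minimum number of arcs of a directed path to which $T$ maps homomorphically. The arc graph of $G=(V,A)$ is $\delta G=(A,\delta A)$ with $\delta A=\{((u,v),(v,w)) : (u,v),(v,w)\in A\}$. *)

(* Defs.v *)
From mathcomp Require Import all_boot.
Set Implicit Arguments. Unset Strict Implicit. Unset Printing Implicit Defensive.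

Record digraph := Digraph { dvert : finType; darc : rel dvert }.

Definition hom (G H : digraph) : Prop :=
  exists f : dvert G -> dvert H,
    forall u v, darc u v -> darc (f u) (f v).

Definition obstruction_set (F : digraph -> Prop) (H : digraph) : Prop :=
  forall G : digraph, hom G H <-> ~ (exists T, F T /\ hom T G).

Definition uadj (G : digraph) : rel (dvert G) :=
  fun u v => darc u v || darc v u.

(* Oriented tree: no loops, no pair of opposite arcs (so the underlying
   graph is simple), nonempty, and the underlying graph is connected and
   contains no cycle (a cycle = a duplicate-free closed walk with >= 3 vertices). *)
Definition oriented_tree (T : digraph) : Prop :=
  [/\ (forall u : dvert T, ~~ darc u u),
      (forall u v : dvert T, ~~ (darc u v && darc v u)),
      (0 < #|dvert T|)%N,
      (forall u v : dvert T, connect (@uadj T) u v) &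
      (forall c : seq (dvert T), (3 <= size c)%N -> ~~ ucycleb (@uadj T) c)].

Definition dipath (n : nat) : digraph :=
  @Digraph 'I_n.+1 (fun i j => (nat_of_ord i).+1 == nat_of_ord j).

(* Algebraic height at most k: the minimal n with T -> dipath n is <= k,
   i.e. T maps to a directed path with at most k arcs. *)
Definition alg_height_le (T : digraph) (k : nat) : Prop :=
  exists n, (n <= k)%N /\ hom T (dipath n).

Definition arc_graph (G : digraph) : digraph :=
  @Digraph {p : dvert G * dvert G | darc p.1 p.2}
    (fun a b => (val a).2 == (val b).1).

(* Main.v *)
Require Import Defs.
From mathcomp Require Import all_boot.
From Stdlib Require Import Classical.
Set Implicit Arguments. Unset Strict Implicit. Unset Printing Implicit Defensive.

Definition Erel (G : digraph) : rel (dvert G * bool) := fun p q =>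
  match p.2, q.2 with
  | true, false => darc p.1 q.1
  | false, true => darc q.1 p.1
  | _, _ => false end.

Lemma Erel_sym G : symmetric (@Erel G).
Proof. by move=> [a [|]] [b [|]]. Qed.

Lemma connect_homo (A B : finType) (f : A -> B) (e : rel A) (e' : rel B) :
  (forall x y, e x y -> e' (f x) (f y)) ->
  forall x y, connect e x y -> connect e' (f x) (f y).
Proof.
move=> he x _ /connectP[p ep ->]; elim: p x ep => [|z p IH] x /=.
  by move=> _; apply: connect0.
case/andP=> exz /IH; apply: connect_trans; apply: connect1; exact: he.
Qed.

Lemma connect_inv (A : finType) (B : Type) (f : A -> B) (e : rel A) :
  (forall x y, e x y -> f x = f y) ->
  forall x y, connect e x y -> f x = f y.
Proof.
move=> he x _ /connectP[p ep ->]; elim: p x ep => [|z p IH] x //=.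
by case/andP=> exz /IH <-; apply: he.
Qed.

Definition homf (G H : digraph) (f : dvert G -> dvert H) :=
  forall u v, darc u v -> darc (f u) (f v).

Lemma Erel_homo (S S' : digraph) (f : dvert S -> dvert S') : homf f ->
  forall p q, connect (@Erel S) p q ->
  connect (@Erel S') (f p.1, p.2) (f q.1, q.2).
Proof.
move=> hf p q; apply: (connect_homo (f := fun p => (f p.1, p.2))).
by move=> [a [|]] [b [|]] //= /hf.
Qed.

Lemma Erel_level (S : digraph) (L : dvert S -> nat) :
  (forall s t, darc s t -> L t = (L s).+1) ->
  forall p q, connect (@Erel S) p q -> L p.1 + p.2 = L q.1 + q.2.
Proof.
move=> hL; apply: (@connect_inv _ nat (fun p : dvert S * bool => L p.1 + p.2)).
move=> [a [|]] [b [|]] //= /hL ->; by rewrite addn0 addn1.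
Qed.

Definition addleaf (S : digraph) (s0 : dvert S) (dir : bool) : digraph :=
 @Digraph (option (dvert S)) (fun a b => match a, b with
   | Some u, Some v => darc u v
   | Some u, None => dir && (u == s0)
   | None, Some v => ~~ dir && (v == s0)
   | None, None => false end).

Lemma uadj_sym (G : digraph) : symmetric (@uadj G).
Proof. by move=> x y; rewrite /uadj orbC. Qed.

Lemma notin_map_Some (A : eqType) (c : seq (option A)) :
  all (fun o => o != None) c -> c = map Some (pmap id c).
Proof.
elim: c => //= -[y|] c IH //=; by move=> /IH <-.
Qed.

Lemma addleaf_tree S s0 dir : oriented_tree S -> oriented_tree (@addleaf S s0 dir).
Proof.
case=> Hl Ho Hc Hconn Hcyc; split.
- by move=> [u|] //=; apply: Hl.
- move=> [u|] [v|] //=; by case: dir => /=; rewrite ?andbF.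
- by rewrite /addleaf /= card_option.
- have US : forall u v, connect (@uadj (addleaf s0 dir)) (Some u) (Some v).
    by move=> u v; apply: (connect_homo (f := Some) _ (Hconn u v)).
  have N0 : connect (@uadj (addleaf s0 dir)) None (Some s0).
    by apply: connect1; rewrite /uadj /= eqxx; clear US; case: dir.
  have sym := sym_connect_sym (@uadj_sym (addleaf s0 dir)).
  move=> [u|] [v|].
  + exact: US.
  + by apply: connect_trans (US u s0) _; rewrite sym.
  + by apply: connect_trans N0 (US s0 v).
  + exact: connect0.
- have uN : forall u, @uadj (addleaf s0 dir) (Some u) None = (u == s0).
    by move=> u; rewrite /uadj /=; case: dir; rewrite ?andbF ?orbF.
  have Nu : forall u, @uadj (addleaf s0 dir) None (Some u) = (u == s0).
    by move=> u; rewrite uadj_sym.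
  move=> c Hsz; apply/negP => /andP[Hcy Hun].
  case: (boolP (None \in c)) => [inN|notN].
  + case: (rot_to inN) => i s' Hrot.
    have Hcy' : cycle (@uadj (addleaf s0 dir)) (rot i c) by rewrite rot_cycle.
    have Hu' : uniq (rot i c) by rewrite rot_uniq.
    move: Hu' Hcy'; rewrite Hrot => Hu' Hcy'.
    have Hsz' : 2 <= size s'.
      by have := size_rot i c; rewrite Hrot /= => Hs; move: Hsz; rewrite -Hs.
    case: s' Hrot Hu' Hcy' Hsz' => [|a [|b t]] //= _ Hu'.
    case/and4P: Hu' => HN Ha _ _.
    move=> /and3P[Na _ Hp] _.
    rewrite rcons_path in Hp; case/andP: Hp => _ Hz.
    have Hm := mem_last b t.
    case: a Na HN Ha => [a|] //; rewrite Nu => /eqP -> HN Ha.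
    move: Hz Hm; case: (last b t) => [z|] Hz Hm.
      by move: Hz; rewrite uN => /eqP Ez; move: Ha; rewrite -Ez Hm.
    by move: HN; rewrite inE negb_or Hm andbF.
  + have Hall : all (fun o => o != None) c.
      by apply/allP => o Hoc; apply: contraNneq notN => <-.
    move: (notin_map_Some Hall) Hsz Hcy Hun => ->.
    rewrite size_map cycle_map (map_inj_uniq (@Some_inj _)) => Hsz Hcy Hun.
    by have := Hcyc _ Hsz; rewrite /ucycleb Hun andbT; move/negP; apply.
Qed.

Definition point : digraph := @Digraph unit (fun _ _ => false).

Lemma point_tree : oriented_tree point.
Proof.
split => //.
- by rewrite /point /= card_unit.
- by move=> [] []; apply: connect0.
- by move=> [|[] [|[] c]] //.
Qed.

Lemma extend (G : digraph) n (p : seq (dvert G * bool)) : forall (S : digraph)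
  (sg : dvert S -> dvert G) (L : dvert S -> nat) s0 (b0 : bool),
  oriented_tree S -> homf sg -> (forall s t, darc s t -> L t = (L s).+1) ->
  (forall s, L s <= n.+1) -> 0 < L s0 + b0 <= n.+1 ->
  path (@Erel G) (sg s0, b0) p ->
  exists S' (emb : dvert S -> dvert S') (sg' : dvert S' -> dvert G)
    (L' : dvert S' -> nat),
  [/\ oriented_tree S', homf sg', (forall s t, darc s t -> L' t = (L' s).+1),
      (forall s, L' s <= n.+1) &
  [/\ homf emb, (forall s, sg' (emb s) = sg s), (forall s, L' (emb s) = L s) &
    exists s', connect (@Erel S') (emb s0, b0) (s', (last (sg s0, b0) p).2)
               /\ sg' s' = (last (sg s0, b0) p).1]].
Proof.
elim: p => [|[w b1] p IH] S sg L s0 b0 HT Hsg HL HLb Hb /=.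
  move=> _; exists S, id, sg, L; split => //; split => //.
  by exists s0; split => //; apply: connect0.
case/andP=> He Hp.
pose S1 := addleaf s0 b0.
pose sg1 := fun o : dvert S1 => match o with Some s => sg s | None => w end.
pose L1 := fun o : dvert S1 => match o with Some s => L s | None => L s0 + b0 - b1 end.
have Hb1 : b1 = ~~ b0 by move: He; rewrite /Erel /=; case: (b0); case: (b1).
have HT1 : oriented_tree S1 by apply: addleaf_tree.
have Hsg1 : homf sg1.
  move=> [u|] [v|] //=; first exact: Hsg.
  + by case/andP=> Hb0 /eqP ->; move: He; rewrite /Erel /= Hb1 Hb0.
  + by case/andP=> /negbTE Hb0 /eqP ->; move: He; rewrite /Erel /= Hb1 Hb0.
have HL1 : forall s t, darc s t -> L1 t = (L1 s).+1.
  move=> [u|] [v|] //=; first exact: HL.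
  + by case/andP=> Hb0 /eqP ->; rewrite Hb1 Hb0 /= subn0 addn1.
  + case/andP=> /negbTE Hb0 /eqP ->; rewrite Hb1 Hb0 /=; move: Hb; rewrite Hb0.
    by rewrite !addn0 subn1 => /andP[/prednK ->].
have HLb1 : forall s, L1 s <= n.+1.
  move=> [s|] /=; first exact: HLb.
  by apply: leq_trans (leq_subr _ _) _; case/andP: Hb.
have HN : L1 None + b1 = L s0 + b0.
  rewrite /= Hb1; move: Hb; case: (b0) => /=; rewrite ?addn0 ?subn0 ?addn1 //.
  by rewrite subn1 => /andP[/prednK ->].
have HbN : 0 < L1 None + b1 <= n.+1 by rewrite HN.
have [S' [emb1 [sg' [L' [HT' Hsg' HL' HLb' [Hemb1 Hsge Hle [s' [Hc Hs']]]]]]]] :=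
  IH S1 sg1 L1 None b1 HT1 Hsg1 HL1 HLb1 HbN Hp.
exists S', (fun s => emb1 (Some s)), sg', L'; split => //; split.
- by move=> u v huv; apply: Hemb1.
- move=> s; exact: Hsge.
- move=> s; exact: Hle.
exists s'; split => //.
apply: connect_trans Hc.
have := @Erel_homo S1 S' emb1 Hemb1 (Some s0, b0) (None, b1); apply.
apply: connect1; rewrite /Erel /= Hb1 eqxx; by case: (b0).
Qed.

Definition Inv (G T : digraph) (n : nat) (h : dvert T -> nat)
  (g : dvert T -> dvert G * bool) (X : {set dvert T}) : Prop :=
  exists S (sg : dvert S -> dvert G) (L : dvert S -> nat)
    (psi : dvert T -> dvert S * bool),
  [/\ oriented_tree S, homf sg, (forall s t, darc s t -> L t = (L s).+1),
      (forall s, L s <= n.+1) &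
  [/\ (forall x, x \in X -> connect (@Erel G) (sg (psi x).1, (psi x).2) (g x)),
      (forall x, x \in X -> L (psi x).1 + (psi x).2 = (h x).+1) &
      (forall x y, x \in X -> y \in X -> darc x y -> exists s,
          connect (@Erel S) (psi x) (s, false) /\
          connect (@Erel S) (psi y) (s, true))]].

Lemma extend_inv (G T : digraph) n h g X x v (c : bool) :
  (forall x, h x <= n) ->
  Inv n h g X -> x \in X -> connect (@Erel G) (g x) (v, c) ->
  exists S (sg : dvert S -> dvert G) (L : dvert S -> nat)
    (psi : dvert T -> dvert S * bool) s',
  [/\ oriented_tree S, homf sg, (forall s t, darc s t -> L t = (L s).+1),
      (forall s, L s <= n.+1) &
  [/\ (forall x, x \in X -> connect (@Erel G) (sg (psi x).1, (psi x).2) (g x)),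
      (forall x, x \in X -> L (psi x).1 + (psi x).2 = (h x).+1),
      (forall x y, x \in X -> y \in X -> darc x y -> exists s,
          connect (@Erel S) (psi x) (s, false) /\
          connect (@Erel S) (psi y) (s, true)),
      connect (@Erel S) (psi x) (s', c) &
      sg s' = v]].
Proof.
move=> Hhb [S [sg [L [psi [HT Hsg HL HLb [Hlab Hlev Harc]]]]]] xX Cx.
have C0 : connect (@Erel G) (sg (psi x).1, (psi x).2) (v, c).
  exact: connect_trans (Hlab x xX) Cx.
case/connectP: C0 => p Hp Elast.
have Hb : 0 < L (psi x).1 + (psi x).2 <= n.+1 by rewrite Hlev //; apply/andP; split => //; exact: Hhb.
have [S' [emb [sg' [L' [HT' Hsg' HL' HLb' [Hemb Hsge Hle [s' [Hc Hs']]]]]]]] :=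
  extend HT Hsg HL HLb Hb Hp.
exists S', sg', L', (fun z => (emb (psi z).1, (psi z).2)), s'; split => //; split.
- by move=> z zX /=; rewrite Hsge; apply: Hlab.
- by move=> z zX /=; rewrite Hle; apply: Hlev.
- move=> a b aX bX ab; have [s [C1 C2]] := Harc a b aX bX ab.
  exists (emb s); split.
  + exact: (Erel_homo Hemb C1).
  + exact: (Erel_homo Hemb C2).
- by move: Hc; rewrite -Elast.
- by rewrite Hs' -Elast.
Qed.

Definition eX (T : digraph) (X : {set dvert T}) : rel (dvert T) :=
  fun a b => [&& a \in X, b \in X & uadj a b].

Lemma eX_sym T X : symmetric (@eX T X).
Proof. by move=> a b; rewrite /eX uadj_sym andbCA. Qed.

Lemma path_eX_in T X a q : path (@eX T X) a q -> all (fun z => z \in X) q.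
Proof.
elim: q a => //= z q IH a /andP[/and3P[_ zX _] Hp]; rewrite zX /=; exact: IH Hp.
Qed.

Lemma uniq_nbr (T : digraph) (X : {set dvert T}) (r x x' w : dvert T) :
  oriented_tree T -> (forall u, u \in X -> connect (@eX T X) r u) ->
  x \in X -> x' \in X -> w \notin X -> uadj x w -> uadj x' w -> x' = x.
Proof.
case=> _ _ _ _ Hcyc Hconn xX x'X wX Hxw Hx'w.
apply/eqP; apply/negPn/negP => Hneq.
have sym := sym_connect_sym (@eX_sym T X).
have C : connect (@eX T X) x x'.
  by apply: connect_trans (Hconn x' x'X); rewrite sym; apply: Hconn.
case/connectP: C => p Hp Elast.
move: Hx'w Hneq; rewrite Elast; case: (shortenP Hp) => p' Hp' Hu _ Hx'w Hneq.
have Hin := path_eX_in Hp'.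
case: p' Hp' Hu Hx'w Hneq Hin => [|z p'] Hp' Hu Hx'w Hneq Hin.
  by rewrite /= eqxx in Hneq.
have := Hcyc (w :: x :: z :: p') isT; apply/negP; apply/negPn.
rewrite /ucycleb /= rcons_path; apply/and4P; split.
have Hpu : path (@uadj T) x (z :: p').
  by apply: (sub_path _ Hp') => a b /and3P[].
rewrite /ucycleb /=.
- move: Hpu => /= /andP[Hxz Hzp]; apply/and4P; split => //.
  by rewrite uadj_sym.
- rewrite !inE negb_or; apply/andP; split.
    by apply: contraNneq wX => ->.
  apply: contra wX => wIn; move/allP: Hin; apply; exact: wIn.
- by case/andP: Hu.
- by move: Hu; rewrite /= => /andP[_ /andP[-> ->]].
Qed.

Lemma grow_step (G T : digraph) n h g (X : {set dvert T}) r x w :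
  oriented_tree T -> (forall a b, darc a b -> h b = (h a).+1) ->
  (forall a, h a <= n) ->
  (forall a b, darc a b -> exists v, connect (@Erel G) (g a) (v, false) /\
                                     connect (@Erel G) (g b) (v, true)) ->
  (forall u, u \in X -> connect (@eX T X) r u) -> Inv n h g X ->
  x \in X -> w \notin X -> uadj x w -> Inv n h g (w |: X).
Proof.
move=> HT Hh Hhb Hg Hconn HI xX wX Hxw.
have Hun : forall x', x' \in X -> uadj x' w -> x' = x.
  by move=> x' x'X Hx'w; apply: (uniq_nbr HT Hconn xX x'X wX Hxw Hx'w).
have [Hl Ho _ _ _] := HT.
have xw : x != w by apply: contraNneq wX => <-.
have Esym := sym_connect_sym (@Erel_sym G).
case/orP: Hxw => [Hxw | Hwx].
- have [v [Cx Cw]] := Hg x w Hxw.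
  have [S [sg [L [psi [s' [HTS Hsg HL HLb [Hlab Hlev Harc Hc Hs']]]]]]] :=
    extend_inv Hhb HI xX Cx.
  exists S, sg, L, (fun z => if z == w then (s', true) else psi z).
  split => //; split.
  + move=> z /=; rewrite !inE; have [-> _|zw /= zX] := eqVneq z w.
      by rewrite /= Hs' Esym.
    exact: Hlab.
  + move=> z /=; rewrite !inE; have [-> _|zw /= zX] := eqVneq z w; last exact: Hlev.
    have := Erel_level HL Hc; rewrite Hlev //= addn0 => <-.
    by rewrite (Hh _ _ Hxw) addn1.
  + move=> a b /=; rewrite !inE.
    have [->|aw] := eqVneq a w; have [->|bw] := eqVneq b w => /= aX bX Hab.
    * by move: (Hl w); rewrite Hab.
    * have Eb := Hun b bX (introT orP (or_intror Hab)); subst b.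
      by move: (Ho x w); rewrite Hxw Hab.
    * have Ea := Hun a aX (introT orP (or_introl Hab)); subst a.
      exists s'; rewrite ?(negbTE xw); split => //; exact: connect0.
    * exact: Harc.
- have [v [Cw Cx]] := Hg w x Hwx.
  have [S [sg [L [psi [s' [HTS Hsg HL HLb [Hlab Hlev Harc Hc Hs']]]]]]] :=
    extend_inv Hhb HI xX Cx.
  exists S, sg, L, (fun z => if z == w then (s', false) else psi z).
  split => //; split.
  + move=> z /=; rewrite !inE; have [-> _|zw /= zX] := eqVneq z w.
      by rewrite /= Hs' Esym.
    exact: Hlab.
  + move=> z /=; rewrite !inE; have [-> _|zw /= zX] := eqVneq z w; last exact: Hlev.
    have := Erel_level HL Hc; rewrite Hlev //= (Hh _ _ Hwx) addn1 addn0.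
    by case.
  + move=> a b /=; rewrite !inE.
    have [->|aw] := eqVneq a w; have [->|bw] := eqVneq b w => /= aX bX Hab.
    * by move: (Hl w); rewrite Hab.
    * have Eb := Hun b bX (introT orP (or_intror Hab)); subst b.
      exists s'; rewrite ?(negbTE xw); split => //; exact: connect0.
    * have Ea := Hun a aX (introT orP (or_introl Hab)); subst a.
      by move: (Ho x w); rewrite Hwx Hab.
    * exact: Harc.
Qed.

Lemma cross (T : finType) (e : rel T) (X : {set T}) a p :
  path e a p -> a \in X -> last a p \notin X ->
  exists x w, [/\ x \in X, w \notin X & e x w].
Proof.
elim: p a => [|b p IH] a /=; first by move=> _ ->.
case/andP=> eab Hp aX Hl.
case: (boolP (b \in X)) => bX; first exact: IH Hp bX Hl.
by exists a, b.
Qed.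

Lemma core (G T : digraph) n (h : dvert T -> nat) (g : dvert T -> dvert G * bool) :
  oriented_tree T -> (forall a b, darc a b -> h b = (h a).+1) ->
  (forall a, h a <= n) ->
  (forall a b, darc a b -> exists v, connect (@Erel G) (g a) (v, false) /\
                                     connect (@Erel G) (g b) (v, true)) ->
  exists S (sg : dvert S -> dvert G) (L : dvert S -> nat)
    (psi : dvert T -> dvert S * bool),
  [/\ oriented_tree S, homf sg, (forall s t, darc s t -> L t = (L s).+1),
      (forall s, L s <= n.+1) &
      (forall x y, darc x y -> exists s,
          connect (@Erel S) (psi x) (s, false) /\
          connect (@Erel S) (psi y) (s, true))].
Proof.
move=> HT Hh Hhb Hg.
have [Hl Ho Hc Hconn Hcyc] := HT.
have [r _] := card_gt0P Hc.
have claim : forall m, m < #|dvert T| -> exists X : {set dvert T},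
    [/\ #|X| = m.+1, r \in X, (forall u, u \in X -> connect (@eX T X) r u) &
        Inv n h g X].
  elim=> [_|m IH Hm].
    exists [set r]; split.
    - by rewrite cards1.
    - by rewrite inE.
    - by move=> u; rewrite inE => /eqP ->; apply: connect0.
    exists point, (fun _ => (g r).1), (fun _ => (h r).+1 - (g r).2),
      (fun _ => (tt, (g r).2)); split => //.
    - exact: point_tree.
    - by move=> _; apply: leq_trans (leq_subr _ _) _; rewrite ltnS.
    split.
    + by move=> x; rewrite inE => /eqP -> /=; case: (g r) => a b; apply: connect0.
    + move=> x; rewrite inE => /eqP -> /=; rewrite subnK //.
      by case: (g r).2.
    + by move=> x y; rewrite !inE => /eqP -> /eqP ->; rewrite (negbTE (Hl r)).
  have [X [HX rX HXc HI]] := IH (ltnW Hm).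
  case: (pickP (fun y => y \notin X)) => [y yX | Hall]; last first.
    have : #|[set: dvert T]| <= #|X|.
      by apply: subset_leq_card; apply/subsetP => z _; move: (Hall z) => /= /negbFE.
    by rewrite cardsT HX leqNgt Hm.
  case/connectP: (Hconn r y) => p Hp Ey.
  have Hyl : last r p \notin X by rewrite -Ey.
  have [x [w [xX wX Hxw]]] := cross Hp rX Hyl.
  exists (w |: X); split.
  - by rewrite cardsU1 wX HX.
  - by rewrite inE rX orbT.
  - move=> u; rewrite !inE.
    have sub : subrel (@eX T X) (connect (@eX T (w |: X))).
      move=> a b /and3P[aX bX ab]; apply: connect1.
      by rewrite /eX !inE aX bX ab !orbT.
    case/orP => [/eqP ->|uX]; last exact: (connect_sub sub (HXc u uX)).
    have Hrx := connect_sub sub (HXc x xX).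
    apply: connect_trans Hrx _.
    by apply: connect1; rewrite /eX !inE xX eqxx Hxw !orbT.
  - exact: grow_step HT Hh Hhb Hg HXc HI xX wX Hxw.
have Hlt : #|dvert T|.-1 < #|dvert T| by rewrite prednK.
have [X [HX _ _ HI]] := claim #|dvert T|.-1 Hlt.
have XT : forall x, x \in X.
  have : X == [set: dvert T] by rewrite eqEcard subsetT cardsT HX /= prednK.
  by move/eqP => -> x; rewrite inE.
have [S [sg [L [psi [HTS Hsg HL HLb [_ _ Harc]]]]]] := HI.
exists S, sg, L, psi; split => // x y; exact: Harc.
Qed.

Definition DL (G : digraph) : digraph :=
  @Digraph (dvert G * bool)%type (fun p q =>
    [exists v, connect (@Erel G) p (v, false) && connect (@Erel G) q (v, true)]).

Lemma adj1 (G H : digraph) : hom (DL G) H -> hom G (arc_graph H).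
Proof.
case=> phi Hphi.
have Hsym := sym_connect_sym (@Erel_sym G).
pose r := root (@Erel G).
have Darc : forall v, darc (phi (r (v, false))) (phi (r (v, true))).
  move=> v; apply: Hphi; apply/existsP; exists v.
  by rewrite Hsym connect_root Hsym connect_root.
exists (fun v => exist (fun p : dvert H * dvert H => darc p.1 p.2)
                  (phi (r (v, false)), phi (r (v, true))) (Darc v)).
move=> u v Huv /=.
have E : r (u, true) = r (v, false).
  by apply/(rootP Hsym); apply: connect1.
by rewrite E.
Qed.

Lemma adj2 (S H T : digraph) (psi : dvert T -> dvert S * bool) :
  hom S (arc_graph H) ->
  (forall x y, darc x y -> exists s,
      connect (@Erel S) (psi x) (s, false) /\ connect (@Erel S) (psi y) (s, true)) ->
  hom T H.
Proof.
case=> phi Hphi Harc.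
pose pi := fun p : dvert S * bool =>
  if p.2 then (val (phi p.1)).2 else (val (phi p.1)).1.
have Hinv : forall p q, @Erel S p q -> pi p = pi q.
  move=> [a [|]] [b [|]] //= Hab.
  - exact/eqP/(Hphi a b Hab).
  - by apply/esym/eqP/(Hphi b a Hab).
exists (fun x => pi (psi x)) => x y /Harc [s [C1 C2]].
rewrite (@connect_inv _ _ pi _ Hinv _ _ C1) (@connect_inv _ _ pi _ Hinv _ _ C2) /=.
exact: (valP (phi s)).
Qed.

Theorem mainTheorem5 (k : nat) (H : digraph) :
  (exists F : digraph -> Prop,
      (forall T, F T -> oriented_tree T /\ alg_height_le T k) /\
      obstruction_set F H) ->
  exists F' : digraph -> Prop,
    (forall T, F' T -> oriented_tree T /\ alg_height_le T k.+1) /\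
    obstruction_set F' (arc_graph H).
Proof.
case=> F [HF HobsF].
exists (fun S => [/\ oriented_tree S, alg_height_le S k.+1 & ~ hom S (arc_graph H)]).
split; first by move=> S [].
move=> G; split.
  move=> [f Hf] [S [[_ _ HnS] [f' Hf']]]; apply: HnS.
  by exists (fun s => f (f' s)) => u v /Hf' /Hf.
move=> Hno; apply: NNPP => HnG.
have HnD : ~ hom (DL G) H by move=> hD; apply: HnG; apply: adj1.
have [T [FT [g Hg]]] : exists T, F T /\ hom T (DL G).
  apply: NNPP => HnT; apply: HnD; exact/(HobsF (DL G)).
have [HTt [n [Hnk [f Hf]]]] := HF T FT.
pose h := fun x => nat_of_ord (f x).
have Hh : forall a b, darc a b -> h b = (h a).+1.
  by move=> a b /Hf /eqP ->.
have Hhb : forall a, h a <= n by move=> a; rewrite -ltnS; exact: ltn_ord.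
have Hg' : forall a b, darc a b -> exists v, connect (@Erel G) (g a) (v, false) /\
                                     connect (@Erel G) (g b) (v, true).
  by move=> a b /Hg /existsP [v /andP [C1 C2]]; exists v.
have [S [sg [L [psi [HTS Hsg HL HLb Harc]]]]] := core HTt Hh Hhb Hg'.
apply: Hno; exists S; split; last by exists sg.
split => //.
- exists n.+1; split; first by rewrite ltnS.
  exists (fun s => (inord (L s) : 'I_n.+2)) => s t Hst /=.
  by rewrite !inordK ?ltnS // (HL _ _ Hst).
- move=> HS; have HTH := adj2 HS Harc.
  apply: (proj1 (HobsF T) HTH); exists T; split => //.
  by exists id.
Qed.
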